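(* Consider the Diophantine equation $n^2-(12s-5)n+12s^2=0$ in positive integers $(n,s)$. The maps $\iota_1(n,s)=(n,n-s)$ and $\iota_2(n,s)=(12s-5-n,s)$ send positive integer solutions to positive integer solutions, and the set of all positive integer solutions is exactly the set of pairs obtained from $(3,1)$ by finitely many applications of $\iota_1$ and $\iota_2$. Explicitly, these are the pairs of the two-sided chain $\dots,(1444,1311),(1444,133),(147,133),(147,14),(16,14),(16,2),(3,2),(3,1),(4,1),(4,3),(27,3),(27,24),(256,24),(256,232),(2523,232),\dots$ in which consecutive pairs are related alternately by $\iota_1$ and $\iota_2$. *)

(* Defs.v *)
From Stdlib Require Import ZArith Lia.
Open Scope Z_scope.

Definition is_pos_sol (p : Z * Z) : Prop :=
  let (n, s) := p in
  0 < n /\ 0 < s /\ n ^ 2 - (12 * s - 5) * n + 12 * s ^ 2 = 0.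

Definition iota1 (p : Z * Z) : Z * Z := let (n, s) := p in (n, n - s).
Definition iota2 (p : Z * Z) : Z * Z := let (n, s) := p in (12 * s - 5 - n, s).

Inductive reachable : Z * Z -> Prop :=
| reach_base : reachable (3, 1)
| reach_iota1 : forall p, reachable p -> reachable (iota1 p)
| reach_iota2 : forall p, reachable p -> reachable (iota2 p).

(* Main.v *)
Require Import Defs.
From Stdlib Require Import ZArith Lia.
Open Scope Z_scope.

Lemma part1 : forall p : Z * Z, is_pos_sol p -> is_pos_sol (iota1 p).
Proof.
  intros [n s] [Hn [Hs E]]; unfold iota1, iota2, is_pos_sol. repeat split; try lia.
  - destruct (Z_lt_le_dec s n); [lia|].
    assert (s * n <= s * s) by nia.
    assert (n*n + 5*n + 12*(s*s) = 12*(s*n)) by (assert (n*n + 5*n + 12*(s*s) - 12*(s*n) = n ^ 2 - (12 * s - 5) * n + 12 * s ^ 2) by ring; lia).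
    nia.
Qed.

Lemma part2 : forall p : Z * Z, is_pos_sol p -> is_pos_sol (iota2 p).
Proof.
  intros [n s] [Hn [Hs E]]; unfold iota1, iota2, is_pos_sol. repeat split; try lia.
  - assert (n * (12 * s - 5 - n) = 12 * s ^ 2) by nia. nia.
Qed.

Lemma base_case : forall n s, 0 < n -> 0 < s ->
  n ^ 2 - (12 * s - 5) * n + 12 * s ^ 2 = 0 -> 2 * s <= n -> 2 * n <= 12 * s - 5 ->
  n = 3 /\ s = 1.
Proof.
  intros n s Hn Hs E H1 H2.
  assert (s = 1).
  { destruct (Z.eq_dec s 1); auto.
    assert ((n - 2*s) * (n - 10*s + 5) <= 0) by nia.
    assert (n ^ 2 - (12 * s - 5) * n + 12 * s ^ 2 = (n - 2*s) * (n - 10*s + 5) - 8*s^2 + 10*s) by ring.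
    nia. }
  subst. nia.
Qed.

Lemma descent : forall k : nat, forall n s, (Z.to_nat (n + s) < k)%nat ->
  is_pos_sol (n, s) -> reachable (n, s).
Proof.
  induction k; intros n s Hk Hp; [lia|].
  pose proof Hp as [Hn [Hs E]].
  destruct (Z_lt_le_dec (n - s) s).
  - assert (iota1 (n, n - s) = (n, s)) as Heq by (simpl; f_equal; lia).
    rewrite <- Heq. apply reach_iota1. apply IHk.
    + assert (n - s > 0) by nia. lia.
    + pose proof (part1 (n, s) Hp). exact H.
  - destruct (Z_lt_le_dec (12 * s - 5 - n) n).
    + assert (iota2 (12 * s - 5 - n, s) = (n, s)) as Heq by (simpl; f_equal; lia).
      rewrite <- Heq. apply reach_iota2. pose proof (part2 (n, s) Hp) as H.
      simpl in H. apply IHk; auto. destruct H as [H _]. lia.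
    + destruct (base_case n s Hn Hs E) as [-> ->]; try lia. constructor.
Qed.

Theorem mainTheorem11 :
  (forall p : Z * Z, is_pos_sol p -> is_pos_sol (iota1 p)) /\
  (forall p : Z * Z, is_pos_sol p -> is_pos_sol (iota2 p)) /\
  (forall p : Z * Z, is_pos_sol p <-> reachable p).
Proof.
  split; [exact part1|]. split; [exact part2|].
  intros p; split.
  - destruct p as [n s]. intros H. apply (descent (S (Z.to_nat (n + s)))); auto.
  - induction 1.
    + simpl. lia.
    + apply part1; auto.
    + apply part2; auto.
Qed.
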